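(* Let $\rho$ be a density matrix and $\epsilon>0$. Consider the following process: a set of states $S$ is initially empty; for each query unit vector $|\psi\rangle$, let $|\psi_S\rangle$ be the orthogonal projection of $|\psi\rangle$ onto $\mathrm{span}(S)$; an oracle produces an estimate $\hat o$ with $|\langle\psi_S|\rho|\psi_S\rangle-\hat o|<\frac38\epsilon$; a mistake may be declared only if $|\langle\psi|\rho|\psi\rangle-\hat o|\ge\frac34\epsilon$, and whenever a mistake is declared, $|\psi\rangle$ is added to $S$. Then the total number of mistakes is at most $\frac{256}{9}\cdot\frac1{\epsilon^2}$.
   Context: Queries $|\psi\rangle$ may be chosen arbitrarily (adaptively); $\rho$ is positive semidefinite with unit trace. *)

(* Defs.v *)
From HB Require Import structures.
From mathcomp Require Import all_boot all_order all_algebra.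
From mathcomp Require Import reals.
From mathcomp Require Import complex.
Set Implicit Arguments. Unset Strict Implicit. Unset Printing Implicit Defensive.
Import Order.TTheory GRing.Theory Num.Theory.
Local Open Scope ring_scope.
Local Open Scope complex_scope.

Section Defs.
Variable R : realType.
Local Notation C := R[i].

Definition cvdot d (u v : 'cV[C]_d) : C := \sum_(i < d) (u i 0)^* * v i 0.

Definition qform d (A : 'M[C]_d) (v : 'cV[C]_d) : C := cvdot v (A *m v).

Definition unit_vec d (v : 'cV[C]_d) : Prop := cvdot v v = 1.

Definition adjmx d (A : 'M[C]_d) : 'M[C]_d := map_mx (fun z => z^*) A^T.

Definition density_matrix d (rho : 'M[C]_d) : Prop :=
  [/\ adjmx rho = rho, (forall v : 'cV[C]_d, 0 <= qform rho v) & \tr rho = 1].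

Definition in_span d (S : seq 'cV[C]_d) (w : 'cV[C]_d) : Prop :=
  exists c : nat -> C, w = \sum_(i < size S) c i *: S`_i.

Definition is_orth_proj d (S : seq 'cV[C]_d) (w wS : 'cV[C]_d) : Prop :=
  in_span S wS /\ (forall x, x \in S -> cvdot x (w - wS) = 0).

End Defs.

(* Main.v *)
Require Import Defs.
From HB Require Import structures.
From mathcomp Require Import all_boot all_order all_algebra.
From mathcomp Require Import reals.
From mathcomp Require Import complex.
From mathcomp Require Import ring lra.
Import Order.TTheory GRing.Theory Num.Theory.
Local Open Scope ring_scope.
Local Open Scope complex_scope.
Set Implicit Arguments. Unset Strict Implicit. Unset Printing Implicit Defensive.

Section Aux.
Variable R : realType.
Local Notation C := R[i].

Definition hc m n (A : 'M[C]_(m,n)) : 'M[C]_(n,m) := map_mx (@conjc R) A^T.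

Lemma hcE m n (A : 'M[C]_(m,n)) i j : hc A i j = (A j i)^*.
Proof. by rewrite !mxE. Qed.

Lemma hcK m n (A : 'M[C]_(m,n)) : hc (hc A) = A.
Proof. by apply/matrixP => i j; rewrite !hcE conjcK. Qed.

Lemma hcM m n p (A : 'M[C]_(m,n)) (B : 'M[C]_(n,p)) : hc (A *m B) = hc B *m hc A.
Proof. by rewrite /hc trmx_mul map_mxM. Qed.

Lemma hcD m n (A B : 'M[C]_(m,n)) : hc (A + B) = hc A + hc B.
Proof. by apply/matrixP => i j; rewrite !(hcE, mxE) rmorphD. Qed.

Lemma hcN m n (A : 'M[C]_(m,n)) : hc (- A) = - hc A.
Proof. by apply/matrixP => i j; rewrite !(hcE, mxE) rmorphN. Qed.

Lemma hcZ m n c (A : 'M[C]_(m,n)) : hc (c *: A) = c^* *: hc A.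
Proof. by apply/matrixP => i j; rewrite !(hcE, mxE) rmorphM. Qed.

Lemma hc_sum m n (I : finType) (P : pred I) (F : I -> 'M[C]_(m,n)) :
  hc (\sum_(i | P i) F i) = \sum_(i | P i) hc (F i).
Proof.
apply/matrixP => i j; rewrite hcE !summxE rmorph_sum.
by apply: eq_bigr => k _; rewrite hcE.
Qed.

Lemma hc1 n : hc (1%:M : 'M[C]_n) = 1%:M.
Proof.
by apply/matrixP => i j; rewrite hcE !mxE conjc_nat eq_sym.
Qed.

Lemma cvdotE d (u v : 'cV[C]_d) : cvdot u v = (hc u *m v) 0 0.
Proof. by rewrite /cvdot !mxE; apply: eq_bigr => i _; rewrite hcE. Qed.

Lemma cvdotC d (u v : 'cV[C]_d) : cvdot v u = (cvdot u v)^*.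
Proof.
rewrite /cvdot rmorph_sum; apply: eq_bigr => i _.
by rewrite rmorphM /= conjcK mulrC.
Qed.

Lemma cvdotDl d (u v w : 'cV[C]_d) : cvdot (u + v) w = cvdot u w + cvdot v w.
Proof. by rewrite /cvdot -big_split; apply: eq_bigr => i _; rewrite !mxE rmorphD mulrDl. Qed.

Lemma cvdotDr d (u v w : 'cV[C]_d) : cvdot w (u + v) = cvdot w u + cvdot w v.
Proof. by rewrite /cvdot -big_split; apply: eq_bigr => i _; rewrite !mxE mulrDr. Qed.

Lemma cvdotNl d (u w : 'cV[C]_d) : cvdot (- u) w = - cvdot u w.
Proof. by rewrite /cvdot -sumrN; apply: eq_bigr => i _; rewrite !mxE rmorphN mulNr. Qed.

Lemma cvdotNr d (u w : 'cV[C]_d) : cvdot w (- u) = - cvdot w u.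
Proof. by rewrite /cvdot -sumrN; apply: eq_bigr => i _; rewrite !mxE mulrN. Qed.

Lemma cvdotZl d c (u w : 'cV[C]_d) : cvdot (c *: u) w = c^* * cvdot u w.
Proof. by rewrite /cvdot mulr_sumr; apply: eq_bigr => i _; rewrite !mxE rmorphM mulrA. Qed.

Lemma cvdotZr d c (u w : 'cV[C]_d) : cvdot w (c *: u) = c * cvdot w u.
Proof. by rewrite /cvdot mulr_sumr; apply: eq_bigr => i _; rewrite !mxE mulrCA. Qed.

Lemma cvdot_suml d (I : finType) (P : pred I) (F : I -> 'cV[C]_d) w :
  cvdot (\sum_(i | P i) F i) w = \sum_(i | P i) cvdot (F i) w.
Proof.
rewrite /cvdot exchange_big /=; apply: eq_bigr => j _.
by rewrite summxE rmorph_sum mulr_suml.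
Qed.

Lemma cvdot_ge0 d (u : 'cV[C]_d) : 0 <= cvdot u u.
Proof. by apply: sumr_ge0 => i _; rewrite mulrC mulcJ_ge0. Qed.

Lemma cvdot_eq0 d (u : 'cV[C]_d) : cvdot u u = 0 -> u = 0.
Proof.
move=> /psumr_eq0P H; apply/matrixP => i j; rewrite (ord1 j) mxE.
have /eqP : (u i 0)^* * u i 0 = 0.
  by apply: H => // k _; rewrite mulrC mulcJ_ge0.
by rewrite mulf_eq0 conjc_eq0 orbb => /eqP.
Qed.

Lemma ge0_real (x : C) : 0 <= x -> x = (complex.Re x)%:C.
Proof. by case: x => a b; rewrite lecE /= => /andP[/eqP -> _]. Qed.

End Aux.

Section Trace.
Variable R : realType.
Local Notation C := R[i].
Variable d : nat.
Variable rho : 'M[C]_d.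
Hypothesis herm : hc rho = rho.
Hypothesis psd : forall v : 'cV[C]_d, 0 <= qform rho v.

Lemma qformE v : qform rho v = (hc v *m (rho *m v)) 0 0.
Proof. exact: cvdotE. Qed.

Lemma cvdot_selfC (v : 'cV[C]_d) : (cvdot v v)^* = cvdot v v.
Proof. by rewrite -cvdotC. Qed.

Lemma hc_col_row m n (A : 'M[C]_(m, n)) k : hc (col k A) = row k (hc A).
Proof. by apply/matrixP => i j; rewrite !(hcE, mxE). Qed.

Lemma diag_entry m n (A : 'M[C]_(m, n)) (B : 'M[C]_(n, m)) k :
  (A *m B) k k = (row k A *m col k B) 0 0.
Proof. by rewrite !mxE; apply: eq_bigr => l _; rewrite !mxE. Qed.

Lemma col_mul m n p (A : 'M[C]_(m, n)) (B : 'M[C]_(n, p)) k :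
  col k (A *m B) = A *m col k B.
Proof. by apply/matrixP => i j; rewrite !mxE; apply: eq_bigr => l _; rewrite !mxE. Qed.

Lemma trace_bound (I : finType) (P : pred I) (w : I -> 'cV[C]_d) :
  (forall i j, P i -> P j -> i != j -> cvdot (w i) (w j) = 0) ->
  (forall i, P i -> cvdot (w i) (w i) != 0) ->
  \sum_(i | P i) qform rho (w i) / cvdot (w i) (w i) <= \tr rho.
Proof.
move=> orth nz.
pose n i := cvdot (w i) (w i).
pose Pm := \sum_(i | P i) (n i)^-1 *: (w i *m hc (w i)).
have key i j : hc (w i) *m w j = (cvdot (w i) (w j))%:M.
  by rewrite cvdotE; apply: mx11_scalar.
have hPm : hc Pm = Pm.
  rewrite hc_sum; apply: eq_bigr => i _.
  rewrite hcZ hcM hcK fmorphV; congr (_^-1 *: _); exact: cvdot_selfC.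
have PP : Pm *m Pm = Pm.
  rewrite {1}/Pm mulmx_suml; apply: eq_bigr => i Pi.
  rewrite -scalemxAl mulmx_sumr (bigD1 i) //= big1 ?addr0.
    rewrite -scalemxAr -mulmxA (mulmxA (hc (w i))) key mul_scalar_mx.
    rewrite -scalemxAr !scalerA; congr (_ *: _).
    by rewrite /n mulrA mulfVK // nz.
  move=> j /andP[Pj ji].
  rewrite -scalemxAr -mulmxA (mulmxA (hc (w i))) key orth //; last by rewrite eq_sym.
  by rewrite raddf0 mul0mx mulmx0 scaler0.
pose Q := 1%:M - Pm.
have hQ : hc Q = Q by rewrite /Q hcD hcN hc1 hPm.
have QQ : Q *m Q = Q.
  rewrite /Q mulmxBl mulmxBr mulmxBr mul1mx mulmx1 PP.
  by rewrite mul1mx subrr subr0.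
have trP : \tr (rho *m Pm) = \sum_(i | P i) qform rho (w i) / n i.
  rewrite mulmx_sumr raddf_sum; apply: eq_bigr => i _.
  rewrite -scalemxAr /= mxtraceZ mulmxA mxtrace_mulC trace_mx11 -qformE.
  by rewrite mulrC.
have trQ : 0 <= \tr (rho *m Q).
  rewrite -QQ mulmxA mxtrace_mulC; apply: sumr_ge0 => k _.
  by rewrite diag_entry col_mul -[in row _ _]hQ -hc_col_row -qformE.
have -> : \tr rho = \tr (rho *m Pm) + \tr (rho *m Q).
  by rewrite /Q mulmxBr mulmx1 raddfB /= addrC subrK.
by rewrite -trP lerDl.
Qed.

End Trace.

Section CS.
Variable R : realType.
Local Notation C := R[i].
Local Notation Re := complex.Re.
Variable d : nat.
Variable rho : 'M[C]_d.
Hypothesis herm : hc rho = rho.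
Hypothesis psd : forall v : 'cV[C]_d, 0 <= qform rho v.

Definition Bf (u v : 'cV[C]_d) := cvdot u (rho *m v).

Lemma BC u v : Bf v u = (Bf u v)^*.
Proof.
rewrite /Bf cvdotC; congr (_^*).
by rewrite !cvdotE hcM herm mulmxA.
Qed.

Lemma conjR (x : R) : Num.conj (x%:C : C) = x%:C.
Proof. exact: conjc_real. Qed.

Lemma ReD (z w : C) : Re (z + w) = Re z + Re w.
Proof. by case: z; case: w. Qed.

Lemma CSineq u v : (Re (Bf u v))^+2 <= Re (qform rho u) * Re (qform rho v).
Proof.
set a := Re (qform rho u); set b := Re (qform rho v); set x := Re (Bf u v).
have Eu : cvdot u (rho *m u) = a%:C by exact: ge0_real (psd u).
have Ev : cvdot v (rho *m v) = b%:C by exact: ge0_real (psd v).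
have Hq : forall s r : R, 0 <= s^+2 * a + 2 * s * r * x + r^+2 * b.
  move=> s r; have := psd (s%:C *: u + r%:C *: v).
  rewrite /qform mulmxDr -!scalemxAr !(cvdotDl, cvdotDr, cvdotZl, cvdotZr) !conjR.
  have -> : cvdot v (rho *m u) = (Bf u v)^* by rewrite -BC.
  rewrite Eu Ev -/(Bf u v).
  have -> : s%:C * (s%:C * a%:C + r%:C * Bf u v) +
      r%:C * (s%:C * (Bf u v)^* + r%:C * b%:C) =
      s%:C * s%:C * a%:C + s%:C * r%:C * (Bf u v + (Bf u v)^*) + r%:C * r%:C * b%:C.
    by ring.
  rewrite addcJ -/x.
  have -> : s%:C * s%:C * a%:C + s%:C * r%:C * (2 * x%:C) + r%:C * r%:C * b%:C
      = (s^+2 * a + 2 * s * r * x + r^+2 * b)%:C.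
    rewrite !rmorphD !rmorphM rmorph_nat /=; ring.
  by rewrite ler0c.
have a0 : 0 <= a by rewrite -ler0c -Eu psd.
have b0 : 0 <= b by rewrite -ler0c -Ev psd.
have [b00|bpos] := eqVneq b 0.
  have := Hq x (- (a + 1)); rewrite b00 !mulr0 addr0 => H.
  have : x ^+ 2 * (a + 2) <= 0 by nra.
  have : 0 <= x ^+ 2 * (a + 2) by nra.
  nra.
have bp : 0 < b by rewrite lt_def bpos b0.
have := Hq b (- x); nra.
Qed.


Lemma span_orth (S : seq 'cV[C]_d) w y :
  in_span S w -> (forall x, x \in S -> cvdot x y = 0) -> cvdot w y = 0.
Proof.
case=> c -> H; rewrite cvdot_suml big1 // => i _.
by rewrite cvdotZl H; [exact: mulr0 | exact: mem_nth].
Qed.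

Lemma qform0 : qform rho 0 = 0.
Proof. by rewrite /qform mulmx0 /cvdot big1 // => i _; rewrite !mxE mulr0. Qed.

Hypothesis tr1 : \tr rho = 1.

Lemma qform_le u : qform rho u <= cvdot u u.
Proof.
have [/cvdot_eq0 ->|nz] := eqVneq (cvdot u u) 0; first by rewrite qform0 cvdot_ge0.
have := @trace_bound R d rho psd _ (@predT 'I_1) (fun _ => u).
rewrite big_ord1 tr1 => /(_ _ _).
have np : 0 < cvdot u u by rewrite lt_def nz cvdot_ge0.
rewrite ler_pdivrMr // mul1r; apply => //.
by move=> i j _ _; rewrite (ord1 i) (ord1 j) eqxx.
Qed.

Lemma mistake (S : seq 'cV[C]_d) psi psiS (o eps : R) :
  0 < eps -> unit_vec psi -> is_orth_proj S psi psiS ->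
  `|qform rho psiS - o%:C| < (3 / 8 * eps)%:C ->
  (3 / 4 * eps)%:C <= `|qform rho psi - o%:C| ->
  cvdot (psi - psiS) (psi - psiS) != 0 /\
  (9 / 256 * eps ^+ 2)%:C <= qform rho (psi - psiS) / cvdot (psi - psiS) (psi - psiS).
Proof.
move=> eps0 hu [hspan horth] h1 h2.
set u := psiS; set v := psi - psiS.
have psiE : psi = u + v by rewrite /v addrC subrK.
have uv : cvdot u v = 0 by exact: span_orth hspan horth.
clearbody v.
have vu : cvdot v u = 0 by rewrite cvdotC uv rmorph0.
have nsum : cvdot u u + cvdot v v = 1.
  by move: hu; rewrite /unit_vec psiE cvdotDl !cvdotDr uv vu addr0 add0r.
have nu1 : cvdot u u <= 1 by rewrite -nsum lerDl cvdot_ge0.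
have nv1 : cvdot v v <= 1 by rewrite -nsum lerDr cvdot_ge0.
set a := Re (qform rho u); set b := Re (qform rho v); set c := Re (qform rho psi).
set x := Re (Bf u v); set y := Re (Bf psi v).
have Ea : qform rho u = a%:C by exact: ge0_real (psd u).
have Eb : qform rho v = b%:C by exact: ge0_real (psd v).
have Ec : qform rho psi = c%:C by exact: ge0_real (psd psi).
have a0 : 0 <= a by rewrite -ler0c -Ea psd.
have b0 : 0 <= b by rewrite -ler0c -Eb psd.
have c0 : 0 <= c by rewrite -ler0c -Ec psd.
have a1 : a <= 1.
  by rewrite -lecR -Ea rmorph1; apply: le_trans (qform_le u) nu1.
have c1 : c <= 1.
  by rewrite -lecR -Ec rmorph1 -hu; apply: qform_le.
have Hc : c = a + 2 * x + b.
  apply: complexI; rewrite -Ec !rmorphD rmorphM rmorph_nat /= -Ea -Eb.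
  rewrite {1}psiE /qform mulmxDr !(cvdotDl, cvdotDr) -/(Bf u v).
  have -> : cvdot v (rho *m u) = (Bf u v)^* by rewrite -BC.
  rewrite -[2 * _]addcJ /qform; ring.
have Hy : y = x + b.
  by rewrite /y /Bf psiE cvdotDl ReD -/(Bf u v) -/x -/(qform rho v) Eb.
have CS1 := CSineq u v.
have CS2 := CSineq psi v.
rewrite -/a -/b -/x in CS1; rewrite -/c -/b -/y in CS2.
have gap : 3 / 8 * eps < `|c - a|.
  have H3 := le_trans h2 (ler_distD (qform rho u) _ _).
  have H4 : `|qform rho psi - qform rho u| + `|qform rho u - o%:C| <
            `|qform rho psi - qform rho u| + (3 / 8 * eps)%:C.
    by rewrite ltrD2l; exact: h1.
  have H5 := le_lt_trans H3 H4.
  move: H5; rewrite Ec Ea -rmorphB normc_def /= expr0n /= addr0 sqrtr_sqr.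
  rewrite -rmorphD ltcR; lra.
have bgt : 9 / 256 * eps ^+ 2 < b.
  have [ca|ca] := lerP 0 (c - a).
    move: gap; rewrite ger0_norm // => gap; nra.
  move: gap; rewrite ltr0_norm // => gap; nra.
have nz : cvdot v v != 0.
  apply/eqP => /cvdot_eq0 v0; move: bgt; rewrite /b v0 qform0 /=; nra.
split=> //.
have np : 0 < cvdot v v by rewrite lt_def nz cvdot_ge0.
rewrite ler_pdivlMr // Eb.
apply: le_trans (ler_piMr _ nv1); last by rewrite ler0c.
by rewrite ler_pM2r // lecR ltW.
Qed.

End CS.

Unset Implicit Arguments.

Theorem mainTheorem15 (R : realType) (d : nat) (rho : 'M[R[i]]_d) (eps : R) :
  density_matrix rho -> 0 < eps ->
  forall (T : nat) (psi psiS : nat -> 'cV[R[i]]_d) (o : nat -> R)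
         (m : nat -> bool),
    (forall t, (t < T)%N -> unit_vec (psi t)) ->
    (forall t, (t < T)%N ->
       is_orth_proj [seq psi s | s <- iota 0 t & m s] (psi t) (psiS t)) ->
    (forall t, (t < T)%N ->
       `|qform rho (psiS t) - (o t)%:C| < (3 / 8 * eps)%:C) ->
    (forall t, (t < T)%N -> m t ->
       (3 / 4 * eps)%:C <= `|qform rho (psi t) - (o t)%:C|) ->
    ((\sum_(t < T) m t)%N%:R <= 256 / 9 / eps ^+ 2 :> R).
Proof.
move=> [herm psd tr1] eps0 T psi psiS o m hu hproj h1 h2.
have hermh : hc rho = rho by exact: herm.
pose v t := psi t - psiS t.
have orth_lt : forall s t, (s < t)%N -> (t < T)%N -> m s -> m t ->
    cvdot (v s) (v t) = 0.
  move=> s t st tT ms mt.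
  have [_ horth] := hproj t tT.
  have sT : (s < T)%N by apply: ltn_trans st tT.
  have [hsp _] := hproj s sT.
  rewrite /v cvdotDl cvdotNl horth; last first.
    by apply: map_f; rewrite mem_filter ms mem_iota.
  rewrite (span_orth hsp) ?subr0 //.
  move=> x /mapP [k]; rewrite mem_filter mem_iota => /andP[mk /andP[_ ks]] ->.
  apply: horth; apply: map_f; rewrite mem_filter mk mem_iota /=.
  by rewrite (ltn_trans ks st).
have orth : forall s t : 'I_T, m s -> m t -> s != t -> cvdot (v s) (v t) = 0.
  move=> s t ms mt; rewrite neq_ltn => /orP[st|ts].
    exact: orth_lt.
  by rewrite cvdotC orth_lt // rmorph0.
have nz : forall t : 'I_T, m t -> cvdot (v t) (v t) != 0.
  move=> t mt.
  exact: (mistake hermh psd tr1 eps0 (hu t (ltn_ord t)) (hproj t (ltn_ord t))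
                  (h1 t (ltn_ord t)) (h2 t (ltn_ord t) mt)).1.
have TB := trace_bound psd orth nz.
rewrite tr1 in TB.
have LB : \sum_(t < T | m t) (9 / 256 * eps ^+ 2)%:C <=
          \sum_(t < T | m t) qform rho (v t) / cvdot (v t) (v t).
  apply: ler_sum => t mt.
  exact: (mistake hermh psd tr1 eps0 (hu t (ltn_ord t)) (hproj t (ltn_ord t))
                  (h1 t (ltn_ord t)) (h2 t (ltn_ord t) mt)).2.
have H := le_trans LB TB.
rewrite -rmorph_sum -(rmorph1 (real_complex R)) lecR in H.
have E : \sum_(t < T | m t) (9 / 256 * eps ^+ 2) =
         ((\sum_(t < T) m t)%N)%:R * (9 / 256 * eps ^+ 2).
  rewrite natr_sum mulr_suml big_mkcond /=; apply: eq_bigr => t _.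
  by case: (m t); rewrite ?mul1r ?mul0r.
rewrite E in H.
have e2 : 0 < eps ^+ 2 by rewrite exprn_gt0.
rewrite ler_pdivlMr //.
move: H; set N := _%:R; nra.
Qed.
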